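(* Let $(\mathcal{C}^{\bullet},\partial)$ be a cochain complex of real vector spaces with a compatible bigrading $\mathcal{C}^{k}=\bigoplus_{p+q=k}\mathcal{C}^{p,q}$, $\mathcal{C}^{p,q}=\{0\}$ whenever $p<0$ or $q<0$, and $\partial=\partial_{2,-1}+\partial_{1,0}+\partial_{0,1}$ with $\partial_{i,j}(\mathcal{C}^{p,q})\subseteq\mathcal{C}^{p+i,q+j}$. Then for all $p,q\in\mathbb{Z}$ with $p+q=k$, \[ E^{p,q}_{\infty}\cong\frac{\pi_{q}(Z^{k}(\mathcal{C},\partial))\cap\mathcal{C}^{p,q}}{\pi_{q}(B^{k}(\mathcal{C},\partial))\cap\mathcal{C}^{p,q}}. \]
   Context: $F^{p}\mathcal{C}:=\bigoplus_{i\geq p}\mathcal{C}^{i,j}$ and $F^{p}\mathcal{C}^{k}:=F^{p}\mathcal{C}\cap\mathcal{C}^{k}$; $E^{p,q}_{\infty}:=\dfrac{Z^{p+q}(\mathcal{C},\partial)\cap F^{p}\mathcal{C}^{p+q}+F^{p+1}\mathcal{C}^{p+q}}{B^{p+q}(\mathcal{C},\partial)\cap F^{p}\mathcal{C}^{p+q}+F^{p+1}\mathcal{C}^{p+q}}$ (the limit term of the spectral sequence of the filtered complex). $G^{q}\mathcal{C}:=\bigoplus_{j\geq q}\mathcal{C}^{i,j}$ and $\pi_{q}:\mathcal{C}\to G^{q}\mathcal{C}$ is the projection along the bigrading. $Z^{k},B^{k}$ denote $k$-cocycles and $k$-coboundaries. *)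

(* Defs.v *)
From HB Require Import structures.
From mathcomp Require Import all_boot all_order all_algebra.
From mathcomp Require Export reals.
Set Implicit Arguments. Unset Strict Implicit. Unset Printing Implicit Defensive.
Import Order.TTheory GRing.Theory Num.Theory.
Local Open Scope ring_scope.

(* The total space C = (+)_{p,q} C^{p,q} of the complex is modelled as an
   ambient real vector space V together with the family of projections
   P p q : V -> V onto the summands C^{p,q} along the bigrading. *)
Section BigradedComplex.
Variables (R : realType) (V : lmodType R).
Variable P : int -> int -> {linear V -> V}.

Definition inC (p q : int) (v : V) : Prop := P p q v = v.
Definition inDeg (k : int) (v : V) : Prop :=
  forall i j : int, i + j != k -> P i j v = 0.
(* v lies in F^p C = (+)_{i >= p} C^{i,j} *)
Definition inF (p : int) (v : V) : Prop :=
  forall i j : int, i < p -> P i j v = 0.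
(* w = pi_q v, where pi_q : C -> G^q C = (+)_{j >= q} C^{i,j} is the
   projection along the bigrading *)
Definition is_pi (q : int) (v w : V) : Prop :=
  forall i j : int, P i j w = if q <= j then P i j v else 0.

Variable d : {linear V -> V}.
Definition cocycle (k : int) (v : V) : Prop := inDeg k v /\ d v = 0.
Definition coboundary (k : int) (v : V) : Prop :=
  inDeg k v /\ exists u, inDeg (k - 1) u /\ d u = v.

Definition bigraded_complex (d21 d10 d01 : {linear V -> V}) : Prop :=
  [/\
      (forall p q p' q' v, P p q (P p' q' v) =
          if (p == p') && (q == q') then P p q v else 0),
      (forall v, exists s : seq (int * int),
          uniq s /\ v = \sum_(x <- s) P x.1 x.2 v),
      (forall p q v, (p < 0) || (q < 0) -> P p q v = 0) &
      (
      (forall v, d (d v) = 0) /\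
      (forall v, d v = d21 v + d10 v + d01 v) /\
      (forall p q v, inC p q v ->
          [/\ inC (p + 2) (q - 1) (d21 v),
              inC (p + 1) q (d10 v) &
              inC p (q + 1) (d01 v)]))].

(* E_infty^{p,q} = (Z^k cap F^p C^k + F^{p+1}C^k) / (B^k cap F^p C^k + F^{p+1}C^k) *)
Definition Einf_num (p k : int) (v : V) : Prop :=
  exists a b, v = a + b /\ cocycle k a /\ inF p a /\ inDeg k b /\ inF (p + 1) b.
Definition Einf_den (p k : int) (v : V) : Prop :=
  exists a b, v = a + b /\ coboundary k a /\ inF p a /\ inDeg k b /\ inF (p + 1) b.

Definition piZ_num (p q k : int) (w : V) : Prop :=
  inC p q w /\ exists z, cocycle k z /\ is_pi q z w.
Definition piB_den (p q k : int) (w : V) : Prop :=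
  inC p q w /\ exists z, coboundary k z /\ is_pi q z w.

End BigradedComplex.

(* For subspaces B <= A and B' <= A' of V: the quotients A/B and A'/B' are
   linearly isomorphic, i.e. there is a linear map f : A -> V with values in
   A' inducing a well-defined, injective and surjective map A/B -> A'/B'. *)
Definition quot_iso (R : realType) (V : lmodType R) (A B A' B' : V -> Prop) : Prop :=
  exists f : V -> V,
    [/\ (forall (r : R) a b, A a -> A b -> f (r *: a + b) = r *: f a + f b),
        (forall a, A a -> A' (f a)),
        (forall a, A a -> (B' (f a) <-> B a)) &
        (forall a', A' a' -> exists a, A a /\ B' (a' - f a))].

(* Main.v *)
Require Import Defs.
From HB Require Import structures.
From mathcomp Require Import all_boot all_order all_algebra.
From mathcomp Require Import reals.
From mathcomp Require Import zify.
Import Order.TTheory GRing.Theory Num.Theory.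
Local Open Scope ring_scope.

Section Helpers.
Variables (R : realType) (V : lmodType R).
Variable P : int -> int -> {linear V -> V}.
Hypothesis Horth : forall p q p' q' v, P p q (P p' q' v) =
          if (p == p') && (q == q') then P p q v else 0.

Lemma h_pi (p q k : int) (x : V) : p + q = k -> inDeg P k x -> inF P p x ->
  is_pi P q x (P p q x).
Proof.
move=> Hk Hd Hf i j; rewrite Horth.
case: (eqVneq i p) => [->|Hip]; case: (eqVneq j q) => [->|Hjq] /=;
  rewrite ?lexx //; apply/esym.
- case: (leP q j) => Hqj //; apply: Hd; apply/eqP; lia.
- case: (ltP i p) => Hip'; first exact: Hf.
  apply: Hd; apply/eqP; lia.
- case: (leP q j) => Hqj //; case: (ltP i p) => Hip'; first exact: Hf.
  apply: Hd; apply/eqP; lia.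
Qed.

Lemma h_F (p q k : int) (z w : V) : p + q = k -> inDeg P k z ->
  is_pi P q z w -> inC P p q w -> inF P p z.
Proof.
move=> Hk Hd Hpi Hc i j Hij.
case: (eqVneq (i + j) k) => Hijk; last exact: Hd.
have := Hpi i j; have -> : (q <= j) = true by apply/idP; lia.
move=> <-; rewrite -Hc Horth.
have -> : (i == p) = false by apply/eqP; lia.
by [].
Qed.

Lemma h_P0 (p q : int) (b : V) : inF P (p + 1) b -> P p q b = 0.
Proof. by move=> Hb; apply: Hb; lia. Qed.

End Helpers.

Theorem lemma2p1 (R : realType) (V : lmodType R)
    (P : int -> int -> {linear V -> V}) (d d21 d10 d01 : {linear V -> V})
    (HC : bigraded_complex P d d21 d10 d01)
    (p q k : int) (Hk : p + q = k) :
  quot_iso (Einf_num P d p k) (Einf_den P d p k)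
           (piZ_num P d p q k) (piB_den P d p q k).
Proof.
case: HC => Horth _ _ _.
have Hid : forall v, P p q (P p q v) = P p q v.
  by move=> v; rewrite Horth !eqxx.
have inDegD : forall a b, inDeg P k a -> inDeg P k b -> inDeg P k (a + b).
  by move=> a b Ha Hb i j Hij; rewrite linearD Ha ?Hb ?addr0.
have inDegN : forall a, inDeg P k a -> inDeg P k (- a).
  by move=> a Ha i j Hij; rewrite linearN Ha ?oppr0.
have inFD : forall r a b, inF P r a -> inF P r b -> inF P r (a + b).
  by move=> r a b Ha Hb i j Hij; rewrite linearD Ha ?Hb ?addr0.
have inFN : forall r a, inF P r a -> inF P r (- a).
  by move=> r a Ha i j Hij; rewrite linearN Ha ?oppr0.
have inFS : forall a, inF P (p + 1) a -> inF P p a.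
  by move=> a Ha i j Hij; apply: Ha; lia.
exists (P p q); split.
- by move=> r a b _ _; rewrite linearP.
- move=> a [a0 [b0 [-> [[Ha0d Ha0c] [Ha0f [Hb0d Hb0f]]]]]].
  split; first by rewrite /inC Hid.
  exists a0; split; first by split.
  rewrite linearD (@h_P0 _ _ P p q b0 Hb0f) addr0; exact: (@h_pi _ _ P Horth p q k _ Hk).
- move=> a [a0 [b0 [Ha [[Ha0d Ha0c] [Ha0f [Hb0d Hb0f]]]]]].
  have Had : inDeg P k a by rewrite Ha; apply: inDegD.
  have Haf : inF P p a by rewrite Ha; apply: inFD => //; apply: inFS.
  split.
  + move=> [Hc [z [[Hzd Hzb] Hpi]]].
    have Hzf := @h_F _ _ P Horth p q k _ _ Hk Hzd Hpi Hc.
    exists z, (a - z); split; first by rewrite addrC subrK.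
    split; first by split.
    split => //; split; first by apply: inDegD => //; apply: inDegN.
    move=> i j Hij.
    case: (ltP i p) => Hip.
      by rewrite linearB Haf // Hzf // subr0.
    have -> : i = p by lia.
    case: (eqVneq j q) => [->|Hjq].
      rewrite linearB; have := Hpi p q; rewrite lexx Hid => ->; by rewrite subrr.
    have Hne : p + j != k by apply/eqP; lia.
    by rewrite linearB Had // Hzd // subr0.
  + move=> [a1 [b1 [-> [[Ha1d Ha1b] [Ha1f [Hb1d Hb1f]]]]]].
    split; first by rewrite /inC Hid.
    exists a1; split; first by split.
    rewrite linearD (@h_P0 _ _ P p q b1 Hb1f) addr0; exact: (@h_pi _ _ P Horth p q k _ Hk).
- move=> a' [Hc [z [[Hzd Hzc] Hpi]]].
  have Hzf := @h_F _ _ P Horth p q k _ _ Hk Hzd Hpi Hc.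
  exists z; split.
    exists z, 0; rewrite addr0; split => //; split; first by split.
    by split => //; split => i j _; rewrite linear0.
  have Ha' : a' - P p q z = 0.
    by have := Hpi p q; rewrite lexx (_ : P p q a' = a') // => ->; rewrite subrr.
  rewrite Ha'; split; first by rewrite /inC linear0.
  exists 0; split.
    split; first by move=> i j _; rewrite linear0.
    by exists 0; split; [move=> i j _; rewrite linear0 | rewrite linear0].
  by move=> i j; rewrite !linear0; case: ifP.
Qed.
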